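(* Let $k$ be a field, $V$ a $k$-vector space, and $\varphi\in\operatorname{End}_k(V)$ a finite potent endomorphism with index $i(\varphi)=r$ and AST-decomposition $V=W_\varphi\oplus U_\varphi$. Fix a Jordan basis of $U_\varphi$ induced by $\varphi|_{U_\varphi}$, given by pairwise disjoint index sets $S_1,\dots,S_r$, $\overline S=S_1\cup\dots\cup S_r$, and vectors $v_{s}\in U_\varphi$ ($s\in\overline S$) such that, writing $s_h$ for an element of $S_h$, one has $\varphi^{h}(v_{s_h})=0$ and $\bigcup_{h=1}^r\bigcup_{s_h\in S_h}\{v_{s_h},\varphi(v_{s_h}),\dots,\varphi^{h-1}(v_{s_h})\}$ is a basis of $U_\varphi$. Then the generalized inverses $g\in\operatorname{End}_k(U_\varphi)$ of $\varphi|_{U_\varphi}$ are exactly the linear maps determined, for each $1\le h\le r$ and $s_h\in S_h$, by $$g(\varphi^i(v_{s_h}))=\begin{cases}\varphi^{i-1}(v_{s_h})+\sum_{s_t\in\overline S}\lambda^{i}_{s_h,s_t}\,\varphi^{t-1}(v_{s_t}) & \text{if } 1\le i\le h-1,\\ v_{s_h}' & \text{if } i=0,\end{cases}$$ where $v'_{s_h}\in U_\varphi$ are arbitrary vectors and $\lambda^{i}_{s_h,s_t}\in k$ are arbitrary scalars such that, for each $s_h$ and $i$, $\lambda^{i}_{s_h,s_t}=0$ for all but finitely many $s_t\in\overline S$ (here $t$ denotes the index with $s_t\in S_t$).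
   Context: An endomorphism $\varphi$ of a $k$-vector space $V$ is finite potent if $\varphi^n(V)$ is finite dimensional for some $n$. For such $\varphi$, the AST-decomposition is $V=U_\varphi\oplus W_\varphi$ where $U_\varphi=\{v\in V: \varphi^m(v)=0 \text{ for some } m\}$ and $W_\varphi=\{v\in V: p(\varphi)(v)=0 \text{ for some } p(x)\in k[x] \text{ coprime to } x\}$; both are $\varphi$-invariant, $\varphi|_{U_\varphi}$ is nilpotent, $W_\varphi$ is finite dimensional and $\varphi|_{W_\varphi}$ is an automorphism. The index $i(\varphi)$ is the nilpotency order of $\varphi|_{U_\varphi}$. A generalized inverse of an endomorphism $g_0$ of $U$ is an endomorphism $g$ of $U$ with $g_0\circ g\circ g_0=g_0$. *)

(* Defs.v *)
From HB Require Import structures.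
From mathcomp Require Import all_boot all_order all_algebra.
From mathcomp Require Import boolp.

Set Implicit Arguments.
Unset Strict Implicit.
Unset Printing Implicit Defensive.
Import GRing.Theory.
Local Open Scope ring_scope.

(* U_phi = { v in V : phi^m v = 0 for some m } *)
Definition Upred (k : fieldType) (V : lmodType k) (phi : {linear V -> V})
  : {pred V} := fun v => `[< exists m : nat, iter m phi v = 0 >].

Lemma iter_linear_D (k : fieldType) (V : lmodType k) (phi : {linear V -> V})
  (m : nat) (a : k) (x y : V) :
  iter m phi (a *: x + y) = a *: iter m phi x + iter m phi y.
Proof. by elim: m => //= m ->; rewrite linearD linearZ. Qed.

Lemma Upred_submod (k : fieldType) (V : lmodType k) (phi : {linear V -> V}) :
  GRing.submod_closed (Upred phi).
Proof.
split.
  by apply/asboolP; exists 0%N.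
move=> a x y /asboolP [m Hm] /asboolP [n Hn]; apply/asboolP; exists (m + n)%N.
have z0 : forall p, iter p phi 0 = 0 by elim=> //= p ->; rewrite linear0.
rewrite iter_linear_D.
have -> : iter (m + n) phi x = 0 by rewrite addnC iterD Hm z0.
have -> : iter (m + n) phi y = 0 by rewrite iterD Hn z0.
by rewrite scaler0 addr0.
Qed.

HB.instance Definition _ (k : fieldType) (V : lmodType k) (phi : {linear V -> V}) :=
  GRing.isSubmodClosed.Build k V (Upred phi) (Upred_submod phi).

Definition Usp (k : fieldType) (V : lmodType k) (phi : {linear V -> V}) :=
  {v : V | v \in Upred phi}.

HB.instance Definition _ (k : fieldType) (V : lmodType k) (phi : {linear V -> V}) :=
  [isSub for (@sval V (fun v => v \in Upred phi)) : Usp phi -> V].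
HB.instance Definition _ (k : fieldType) (V : lmodType k) (phi : {linear V -> V}) :=
  [Choice of Usp phi by <:].
HB.instance Definition _ (k : fieldType) (V : lmodType k) (phi : {linear V -> V}) :=
  [SubChoice_isSubLmodule of Usp phi by <:].

Lemma phiU_subproof (k : fieldType) (V : lmodType k) (phi : {linear V -> V})
  (u : Usp phi) : phi (val u) \in Upred phi.
Proof.
case: u => x /= /asboolP [m Hm]; apply/asboolP; exists m.
by rewrite -iterSr iterS Hm linear0.
Qed.

Definition phiU (k : fieldType) (V : lmodType k) (phi : {linear V -> V})
  (u : Usp phi) : Usp phi := exist _ (phi (val u)) (phiU_subproof u).

Definition finite_dim_set (k : fieldType) (V : lmodType k) (P : V -> Prop) :=
  exists l : seq V, forall x, P x ->
    exists c : nat -> k, x = \sum_(i < size l) c i *: l`_i.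

Definition finite_potent (k : fieldType) (V : lmodType k) (phi : {linear V -> V}) :=
  exists n : nat, finite_dim_set (fun x => exists y, x = iter n phi y).

Definition nil_index (k : fieldType) (W : lmodType k) (f : W -> W) (r : nat) :=
  (forall u, iter r f u = 0) /\
  (forall m, (forall u, iter m f u = 0) -> (r <= m)%N).

Definition gen_inverse (k : fieldType) (W : lmodType k) (g0 g : W -> W) :=
  forall u, g0 (g (g0 u)) = g0 u.

(* Linear independence / spanning / basis for a family e indexed by the
   elements j of T satisfying D j (arbitrary, possibly infinite, families;
   linear combinations are finite). *)
Definition lin_indep (k : fieldType) (W : lmodType k) (T : eqType)
  (D : pred T) (e : T -> W) :=
  forall (l : seq T) (c : T -> k), uniq l -> all D l ->
    \sum_(j <- l) c j *: e j = 0 -> forall j, j \in l -> c j = 0.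

Definition spanning (k : fieldType) (W : lmodType k) (T : eqType)
  (D : pred T) (e : T -> W) :=
  forall w : W, exists (l : seq T) (c : T -> k),
    all D l /\ w = \sum_(j <- l) c j *: e j.

Definition is_basis (k : fieldType) (W : lmodType k) (T : eqType)
  (D : pred T) (e : T -> W) := lin_indep D e /\ spanning D e.

(* Main.v *)
Require Import Defs.
From HB Require Import structures.
From mathcomp Require Import all_boot all_order all_algebra.
From mathcomp Require boolp.
Import GRing.Theory.
Local Open Scope ring_scope.

Lemma phiU_lin (k : fieldType) (V : lmodType k) (phi : {linear V -> V}) :
  linear (@phiU k V phi).
Proof.
move=> a x y; apply: val_inj => /=.
by rewrite !raddfD /= linearZ_LR.
Qed.

HB.instance Definition _ (k : fieldType) (V : lmodType k) (phi : {linear V -> V}) :=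
  GRing.isLinear.Build k (Usp phi) (Usp phi) *:%R (@phiU k V phi) (@phiU_lin k V phi).

Section S.
Variables (k : fieldType) (V : lmodType k) (phi : {linear V -> V}).
Local Notation F := (@phiU k V phi).

Lemma iterF0 n : iter n F 0 = 0.
Proof. by elim: n => //= n ->; rewrite linear0. Qed.

Lemma iterF_sum (T : eqType) n (l : seq T) (c : T -> k) (w : T -> Usp phi) :
  iter n F (\sum_(j <- l) c j *: w j) = \sum_(j <- l) c j *: iter n F (w j).
Proof.
elim: n => //= n ->; rewrite linear_sum; apply: eq_bigr => j _.
by rewrite linearZ.
Qed.

Lemma sum_undup (T : eqType) (l : seq T) (c : T -> k) (w : T -> Usp phi) :
  \sum_(j <- l) c j *: w j =
  \sum_(j <- undup l) (c j *+ count_mem j l) *: w j.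
Proof.
rewrite -(@big_undup_iterop_count _ 0 +%R T l xpredT (fun j => c j *: w j)).
apply: eq_bigr => j _; rewrite -scalerMnl.
case: (count_mem j l) => // n; rewrite iteropS.
Qed.

End S.

Section Main.
Variables (k : fieldType) (V : lmodType k) (phi : {linear V -> V}).
Variables (I : eqType) (ht : I -> nat) (v : I -> Usp phi).
Local Notation F := (@phiU k V phi).
Hypothesis htpos : forall s, (0 < ht s)%N.
Hypothesis vnil : forall s, iter (ht s) F (v s) = 0.
Hypothesis hbasis : is_basis (fun p : I * nat => (p.2 < ht p.1)%N)
           (fun p : I * nat => iter p.2 F (v p.1)).

Lemma ker_span (w : Usp phi) : F w = 0 ->
  exists (lam : I -> k) (L : seq I), uniq L /\ (forall t, t \notin L -> lam t = 0) /\
    w = \sum_(t <- L) lam t *: iter (ht t).-1 F (v t).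
Proof.
move=> Fw.
case: hbasis => hind hspan.
have [l0 [c0 [Dl0 ew]]] := hspan w.
rewrite ew sum_undup in Fw *.
set c := fun j => c0 j *+ count_mem j l0.
set l := undup l0.
have ul : uniq l by apply: undup_uniq.
have Dl : all (fun p : I * nat => (p.2 < ht p.1)%N) l.
  by apply/allP => p; rewrite mem_undup => /(allP Dl0).
pose cond := fun p : I * nat => (p.2.+1 < ht p.1)%N.
pose sh := fun p : I * nat => (p.1, p.2.+1).
pose A := [seq p <- l | cond p].
have c0A : forall p, p \in A -> c p = 0.
  have : \sum_(q <- map sh A) c (q.1, q.2.-1) *: iter q.2 F (v q.1) = 0.
    rewrite big_map big_filter /= -[RHS]Fw linear_sum [RHS](bigID cond) /=.
    rewrite [X in _ = _ + X]big1_seq ?addr0.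
      by apply: eq_bigr => -[p1 p2] _; rewrite linearZ.
    move=> p /andP [ncp pl]; have := allP Dl p pl => /= Dp.
    have e : p.2.+1 = ht p.1 by apply/eqP; rewrite eqn_leq Dp leqNgt.
    by rewrite linearZ /= -iterS e vnil scaler0.
  move=> H p pA.
  have ush : injective sh by move=> [a b] [a' b'] [-> ->].
  have := hind _ (fun q => c (q.1, q.2.-1)) _ _ H (sh p) (map_f sh pA).
  rewrite /=; case: p pA => p1 p2 pA /=; apply.
    by rewrite map_inj_uniq // filter_uniq.
  apply/allP => q /mapP [p' p'A ->] /=.
  by move: p'A; rewrite mem_filter => /andP [].
rewrite /c in c0A.
pose B := [seq p <- l | ~~ cond p].
have Bprop : forall p, p \in B -> p.2 = (ht p.1).-1.
  move=> p; rewrite mem_filter => /andP [ncp pl]; have := allP Dl p pl => /= Dp.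
  have e : p.2.+1 = ht p.1 by apply/eqP; rewrite eqn_leq Dp leqNgt.
  by rewrite -e.
exists (fun t => if t \in map fst B then c0 (t, (ht t).-1) *+ count_mem (t, (ht t).-1) l0 else 0), (map fst B).
split.
  rewrite map_inj_in_uniq ?filter_uniq //.
  move=> [a b] [a' b'] /Bprop /= e1 /Bprop /= e2 /= ea.
  by rewrite e1 e2 ea.
split; first by move=> t /negbTE ->.
rewrite (bigID cond) /= big1_seq ?add0r.
  rewrite big_map -big_filter; apply: eq_big_seq => -[p1 p2] pB.
  rewrite (map_f fst pB) /=.
  by have /= -> := Bprop _ pB.
move=> j /andP [cj jl]; by rewrite c0A ?scale0r // mem_filter cj jl.
Qed.
End Main.

Theorem lemma3p10 (k : fieldType) (V : lmodType k) (phi : {linear V -> V})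
  (r : nat) (I : eqType) (ht : I -> nat) (v : I -> Usp phi) :
  finite_potent phi ->
  nil_index (@phiU k V phi) r ->
  (forall s, (0 < ht s <= r)%N) ->
  (forall s, iter (ht s) (@phiU k V phi) (v s) = 0) ->
  is_basis (fun p : I * nat => (p.2 < ht p.1)%N)
           (fun p : I * nat => iter p.2 (@phiU k V phi) (v p.1)) ->
  forall g : {linear Usp phi -> Usp phi},
    gen_inverse (@phiU k V phi) g <->
    exists (v' : I -> Usp phi) (lam : nat -> I -> I -> k) (L : nat -> I -> seq I),
      (forall i s, uniq (L i s) /\ (forall t, t \notin L i s -> lam i s t = 0)) /\
      (forall s, g (v s) = v' s /\
         forall i, (1 <= i <= (ht s).-1)%N ->
           g (iter i (@phiU k V phi) (v s)) =
             iter i.-1 (@phiU k V phi) (v s)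
             + \sum_(t <- L i s) lam i s t *: iter (ht t).-1 (@phiU k V phi) (v t)).
Proof.
move=> _ _ hr vnil hb g.
have htpos s : (0 < ht s)%N by case/andP: (hr s).
split.
- move=> G.
  have key : forall p : nat * I, exists x : (I -> k) * seq I,
      uniq x.2 /\ (forall t, t \notin x.2 -> x.1 t = 0) /\
      ((1 <= p.1 <= (ht p.2).-1)%N -> g (iter p.1 (@phiU k V phi) (v p.2)) =
         iter p.1.-1 (@phiU k V phi) (v p.2)
         + \sum_(t <- x.2) x.1 t *: iter (ht t).-1 (@phiU k V phi) (v t)).
    move=> [i s] /=.
    case: (boolP (1 <= i <= (ht s).-1)%N) => hi; last by exists (fun _ => 0, [::]).
    have Fw : phiU (g (iter i (@phiU k V phi) (v s)) - iter i.-1 (@phiU k V phi) (v s)) = 0.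
      have ei : iter i (@phiU k V phi) (v s) = phiU (iter i.-1 (@phiU k V phi) (v s)).
        by case: i hi.
      by rewrite linearB /= ei G subrr.
    have [lam [L [uL [zL ew]]]] := @ker_span k V phi I ht v vnil hb _ Fw.
    exists (lam, L); split => //; split => // _.
    by rewrite -ew addrC subrK.
  have [f hf] := boolp.choice key.
  exists (fun s => g (v s)), (fun i s => (f (i, s)).1), (fun i s => (f (i, s)).2).
  split; first by move=> i s; case: (hf (i, s)) => [? [? _]].
  move=> s; split => // i hi; by case: (hf (i, s)) => [_ [_ ->]].
- move=> [v' [lam [L [_ H]]]] u.
  case: hb => _ hspan; have [l [c [Dl ->]]] := hspan u.
  rewrite !linear_sum; apply: eq_big_seq => -[s j] pl.
  have /= Dp := allP Dl _ pl.
  rewrite !linearZ /=; congr (_ *: _).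
  rewrite -iterS; case: (ltnP j.+1 (ht s)) => hj.
    have hi : (1 <= j.+1 <= (ht s).-1)%N by rewrite /= -ltnS prednK ?htpos.
    rewrite (proj2 (H s) _ hi) linearD /= linear_sum /= big1 ?addr0 //.
    by move=> t _; rewrite linearZ /= -iterS prednK ?vnil ?scaler0.
  have e : j.+1 = ht s by apply/eqP; rewrite eqn_leq hj Dp.
  by rewrite e vnil !linear0.
Qed.
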